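(* Let $G$ be a maximal $3$-$\gamma_{c}$-vertex critical graph of order $n$, with independence number $\alpha$ and clique number $\omega$. Then $\alpha\cdot\omega\leq\lfloor\frac{n-1}{2}\rfloor\cdot\lceil\frac{n-1}{2}\rceil$; moreover, $\alpha\cdot\omega=(\frac{n-1}{2})^{2}$ if and only if $G\in\mathcal{G}_{1}(l)$ for some $l\geq 2$.
   Context: All graphs are finite, simple and connected. A set $D\subseteq V(G)$ is a connected dominating set of $G$ if every vertex of $G$ is in $D$ or adjacent to a vertex of $D$, and $G[D]$ is connected; $\gamma_{c}(G)$ is the minimum cardinality of such a set. $G$ is $k$-$\gamma_{c}$-edge critical if $\gamma_{c}(G)=k$ and $\gamma_{c}(G+uv)<k$ for every pair of non-adjacent vertices $u,v$. A $2$-connected graph $G$ is $k$-$\gamma_{c}$-vertex critical if $\gamma_{c}(G)=k$ and $\gamma_{c}(G-v)<k$ for every $v\in V(G)$. $G$ is maximal $k$-$\gamma_{c}$-vertex critical if it is both $k$-$\gamma_{c}$-edge critical and $k$-$\gamma_{c}$-vertex critical. For $l\geq 2$, the class $\mathcal{G}_{1}(l)$ consists of the graphs on vertex set $\{v,q_{1},\dots,q_{l},z_{1},\dots,z_{l}\}$ whose edges are: $vz_{i}$ for all $i$; $q_{i}q_{j}$ for all $i\neq j$; and $z_{i}q_{j}$ for all $i\neq j$. *)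

(* Defs.v *)
From mathcomp Require Import all_boot.
Set Implicit Arguments.
Unset Strict Implicit.
Unset Printing Implicit Defensive.

(* Graphs: a subgraph of a simple graph is given by a vertex set V : {set T}
   together with a symmetric irreflexive adjacency relation e : rel T;
   the graph is the induced graph e restricted to V. *)

Definition simple_graph (T : finType) (e : rel T) : Prop :=
  symmetric e /\ irreflexive e.

Definition connectedb (T : finType) (e : rel T) (S : {set T}) : bool :=
  [forall x in S, forall y in S,
     connect [rel a b | [&& e a b, a \in S & b \in S]] x y].

Definition dominatingb (T : finType) (V : {set T}) (e : rel T) (D : {set T}) : bool :=
  (D \subset V) && [forall x in V, (x \in D) || [exists y in D, e x y]].

Definition is_cds (T : finType) (V : {set T}) (e : rel T) (D : {set T}) : bool :=
  dominatingb V e D && connectedb e D.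

(* connected domination number (default #|T|.+1 if no cds exists,
   i.e. if the graph is disconnected) *)
Definition gamma_c (T : finType) (V : {set T}) (e : rel T) : nat :=
  \big[minn/#|T|.+1]_(D : {set T} | is_cds V e D) #|D|.

Definition add_edge (T : finType) (e : rel T) (u v : T) : rel T :=
  [rel x y | [|| e x y, (x == u) && (y == v) | (x == v) && (y == u)]].

Definition two_connected (T : finType) (V : {set T}) (e : rel T) : Prop :=
  2 < #|V| /\ connectedb e V /\ forall v, v \in V -> connectedb e (V :\ v).

Definition edge_critical (T : finType) (V : {set T}) (e : rel T) (k : nat) : Prop :=
  gamma_c V e = k /\
  forall u v, u \in V -> v \in V -> u != v -> ~~ e u v ->
    gamma_c V (add_edge e u v) < k.

Definition vertex_critical (T : finType) (V : {set T}) (e : rel T) (k : nat) : Prop :=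
  two_connected V e /\ gamma_c V e = k /\
  forall v, v \in V -> gamma_c (V :\ v) e < k.

Definition maximal_vertex_critical (T : finType) (V : {set T}) (e : rel T) (k : nat) : Prop :=
  edge_critical V e k /\ vertex_critical V e k.

Definition independentb (T : finType) (e : rel T) (S : {set T}) : bool :=
  [forall x in S, forall y in S, ~~ e x y].

Definition cliqueb (T : finType) (e : rel T) (S : {set T}) : bool :=
  [forall x in S, forall y in S, (x != y) ==> e x y].

Definition independence_number (T : finType) (e : rel T) : nat :=
  \max_(S : {set T} | independentb e S) #|S|.

Definition clique_number (T : finType) (e : rel T) : nat :=
  \max_(S : {set T} | cliqueb e S) #|S|.

(* The class G_1(l): vertex v = None, q_i = Some (inl i), z_i = Some (inr i). *)
Definition G1_vertex (l : nat) : finType := option ('I_l + 'I_l)%type.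

Definition G1_rel (l : nat) : rel (G1_vertex l) :=
  fun a b =>
    match a, b with
    | None, Some (inr _) => true
    | Some (inr _), None => true
    | Some (inl i), Some (inl j) => i != j
    | Some (inr i), Some (inl j) => i != j
    | Some (inl j), Some (inr i) => i != j
    | _, _ => false
    end.

Definition in_G1 (T : finType) (e : rel T) (l : nat) : Prop :=
  exists f : T -> G1_vertex l, bijective f /\ forall x y, e x y = G1_rel (f x) (f y).

(* Main.v *)
Require Import Defs.
From mathcomp Require Import all_boot zify.
Set Implicit Arguments. Unset Strict Implicit. Unset Printing Implicit Defensive.

Lemma amgm a b : 4 * (a * b) <= (a + b) * (a + b).
Proof.
wlog h : a b / a <= b.
  move=> H; case: (leqP a b) => [/H//|/ltnW/H]; by rewrite [a * b]mulnC [a + b]addnC.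
rewrite -(subnKC h); set d := b - a.
rewrite !(mulnDl, mulnDr); nia.
Qed.

Lemma arith1 a b m : a + b <= m -> a * b <= m./2 * uphalf m.
Proof.
rewrite uphalf_half -{1}(odd_double_half m).
have := amgm a b.
case: (odd m) => /=; set q := m./2; rewrite -!muln2 => h0 h.
- have h2 : (a + b) * (a + b) <= (1 + q * 2) * (1 + q * 2) by apply: leq_mul.
  nia.
- have h2 : (a + b) * (a + b) <= (q * 2) * (q * 2) by apply: leq_mul.
  nia.
Qed.

Lemma arith2 a b m : a + b <= m -> 4 * (a * b) = m ^ 2 -> a = b /\ m = a + a.
Proof. move=> h1 h2.
have h3 : (a + b) * (a + b) <= m * m by apply: leq_mul.
nia. Qed.
Lemma bigmin_le (I : finType) (P : pred I) (F : I -> nat) x i0 :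
  P i0 -> \big[minn/x]_(i | P i) F i <= F i0.
Proof.
move=> Pi0; have : i0 \in index_enum I by rewrite mem_index_enum.
elim: (index_enum I) => //= j s IH; rewrite inE big_cons.
case/orP => [/eqP<-|/IH h]; first by rewrite Pi0 geq_minl.
by case: (P j) => //; rewrite geq_min h orbT.
Qed.

Lemma bigmin_lt (I : finType) (P : pred I) (F : I -> nat) x k :
  \big[minn/x]_(i | P i) F i < k -> k <= x -> exists i, P i /\ F i < k.
Proof.
move=> hlt hx; case: (boolP [exists i, P i && (F i < k)]).
  by case/existsP=> i /andP[]; exists i.
move/existsPn=> H; suff : k <= \big[minn/x]_(i | P i) F i by rewrite leqNgt hlt.
apply: (big_ind (fun y => k <= y)) => //.
  by move=> y z hy hz; rewrite leq_min hy hz.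
by move=> i Pi; have := H i; rewrite Pi /= -leqNgt.
Qed.

Definition dom2 (T : finType) (r : rel T) (a b x : T) : bool :=
  [|| x == a, x == b, r x a | r x b].
Definition conn2 (T : finType) (r : rel T) (a b : T) : bool := (a == b) || r a b.

Lemma cds_of_pair (T : finType) (V : {set T}) (r : rel T) a b :
  symmetric r -> a \in V -> b \in V -> conn2 r a b ->
  (forall x, x \in V -> dom2 r a b x) -> is_cds V r [set a; b].
Proof.
move=> rs aV bV hab hd; apply/andP; split.
  apply/andP; split.
    by apply/subsetP=> x; rewrite !inE => /orP[]/eqP->.
  apply/forallP=> x; apply/implyP=> xV; have := hd x xV.
  rewrite /dom2 !inE; case/or4P=> [->|->|h|h]; rewrite ?orbT //.
    by apply/orP; right; apply/existsP; exists a; rewrite !inE eqxx h.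
  by apply/orP; right; apply/existsP; exists b; rewrite !inE eqxx h orbT.
have key : connect [rel x y | [&& r x y, x \in [set a; b] & y \in [set a; b]]] a b.
  case/orP: hab => [/eqP->//|h]; apply: connect1; by rewrite /= h !inE !eqxx ?orbT.
have key' : connect [rel x y | [&& r x y, x \in [set a; b] & y \in [set a; b]]] b a.
  case/orP: hab => [/eqP->//|h]; apply: connect1; by rewrite /= rs h !inE !eqxx ?orbT.
apply/forallP=> x; apply/implyP; rewrite !inE => hx.
apply/forallP=> y; apply/implyP; rewrite !inE => hy.
by case/orP: hx => /eqP->; case/orP: hy => /eqP->.
Qed.

Lemma connect_step (T : finType) (r : rel T) x y :
  connect r x y -> x != y -> exists z, r x z.
Proof.
case/connectP=> [[|z p]] /=; first by move=> _ ->; rewrite eqxx.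
by case/andP=> h _ _ _; exists z.
Qed.

Lemma pair_of_cds (T : finType) (V : {set T}) (r : rel T) D :
  irreflexive r -> is_cds V r D -> #|D| <= 2 -> (exists x, x \in V) ->
  exists a b, [/\ a \in V, b \in V, conn2 r a b & forall x, x \in V -> dom2 r a b x].
Proof.
move=> irr /andP[/andP[sDV /forallP hd] hc] hcard [x0 x0V].
have [a aD] : exists a, a \in D.
  have := hd x0; rewrite x0V /= => /orP[h|/existsP[y /andP[h _]]]; [by exists x0 | by exists y].
have [b [bD hDab]] : exists b, b \in D /\ forall x, x \in D -> (x == a) || (x == b).
  case: (boolP [exists b, (b \in D) && (b != a)]).
    case/existsP=> b /andP[bD ba]; exists b; split => // x xD.
    have sub : [set a; b] \subset D by apply/subsetP=> y; rewrite !inE => /orP[]/eqP->.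
    have : [set a; b] == D.
      by rewrite eqEcard sub /= cards2 eq_sym ba.
    by move/eqP=> eD; move: xD; rewrite -eD !inE.
  move/existsPn=> H; exists a; split => // x xD; have := H x.
  by rewrite xD /= negbK => ->.
exists a, b; split.
- exact: (subsetP sDV).
- exact: (subsetP sDV).
- rewrite /conn2; case: (eqVneq a b) => //= nab.
  have := hc; move/forallP/(_ a)/implyP/(_ aD)/forallP/(_ b)/implyP/(_ bD) => hab.
  have [z] := connect_step hab nab; rewrite /= => /and3P[raz _ zD].
  have := hDab z zD; case/orP=> /eqP ez; first by rewrite ez irr in raz.
  by rewrite -ez.
- move=> x xV; have := hd x; rewrite xV /= => /orP[xD|/existsP[y /andP[yD rxy]]].
    by rewrite /dom2; have := hDab x xD; case/orP=> ->; rewrite ?orbT.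
  rewrite /dom2; have := hDab y yD; case/orP=> /eqP <-; by rewrite rxy ?orbT.
Qed.

Section Main.
Variables (T : finType) (e : rel T).
Hypothesis esym : symmetric e.
Hypothesis eirr : irreflexive e.
Hypothesis Hn : 2 < #|T|.
Hypothesis H0 : forall a b, conn2 e a b -> ~ (forall x, dom2 e a b x).
Hypothesis HV : forall v, exists a b,
  [/\ conn2 e a b, a != v, b != v & forall x, x != v -> dom2 e a b x].
Hypothesis HE : forall u v, u != v -> ~~ e u v -> exists a b,
  conn2 (add_edge e u v) a b /\ forall x, dom2 (add_edge e u v) a b x.

Lemma domC a b x : dom2 e a b x = dom2 e b a x.
Proof. by rewrite /dom2; case: (x == a); case: (x == b); case: (e x a); case: (e x b). Qed.

Lemma conn2C a b : conn2 e a b = conn2 e b a.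
Proof. by rewrite /conn2 eq_sym esym. Qed.

Lemma exists_other (x y : T) : exists z, (z != x) && (z != y).
Proof.
case: (boolP [exists z, (z != x) && (z != y)]); first by case/existsP=> z; exists z.
move/existsPn=> H; have : #|T| <= #|[set x; y]|.
  apply: subset_leq_card; apply/subsetP=> z _; have := H z.
  by rewrite negb_and !negbK !inE => /orP[]->; rewrite ?orbT.
rewrite cards2 => h; move: Hn; rewrite ltnNge (leq_trans h) //; by case: (x != y).
Qed.

Lemma nadjD v a b : conn2 e a b -> (forall x, x != v -> dom2 e a b x) ->
  ~~ e a v /\ ~~ e b v.
Proof.
move=> hc hd; suff H : forall a b, conn2 e a b -> (forall x, x != v -> dom2 e a b x) -> ~~ e a v.
  by split; [apply: (H a b) | apply: (H b a)] => //; [rewrite conn2C | move=> x /hd; rewrite domC].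
move=> {hc hd} a' b' hc hd; apply/negP=> hav; apply: (H0 hc) => x.
case: (eqVneq x v) => [->|/hd//]; by rewrite /dom2 esym hav !orbT.
Qed.

Lemma Iso v : exists x, e v x.
Proof.
have [u /andP[uv _]] := exists_other v v.
have [a [b [hc au bu hd]]] := HV u.
have := hd v; rewrite eq_sym uv => /(_ isT).
rewrite /dom2; case/or4P=> [/eqP va|/eqP vb|h|h]; try by [exists a | exists b].
- move: hc; rewrite /conn2 -va => /orP[/eqP vb|h]; last by exists b.
  have [x /andP[xu xv]] := exists_other u v; have := hd x xu.
  by rewrite /dom2 -va -vb (negbTE xv) /= => /orP[]h; exists x; rewrite esym.
- move: hc; rewrite /conn2 -vb => /orP[/eqP va|h]; last by exists a; rewrite esym.
  have [x /andP[xu xv]] := exists_other u v; have := hd x xu.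
  by rewrite /dom2 va -vb (negbTE xv) /= => /orP[]h; exists x; rewrite esym.
Qed.

Lemma Single v a : (forall x, x != v -> (x == a) || e x a) -> ~~ e a v -> False.
Proof.
move=> hd nav; have [x evx] := Iso v.
have xv : x != v by apply: contraTneq evx => ->; rewrite eirr.
case/orP: (hd x xv) => [/eqP xa|exa].
  by move: evx; rewrite xa esym (negbTE nav).
apply: (H0 (a := a) (b := x)); first by rewrite /conn2 esym exa orbT.
move=> y; case: (eqVneq y v) => [->|/hd]; first by rewrite /dom2 evx !orbT.
by rewrite /dom2; case/orP=> ->; rewrite ?orbT.
Qed.

Lemma HV' v : exists a b, [/\ a != b, e a b, a != v, b != v &
  forall x, x != v -> dom2 e a b x].
Proof.
have [a [b [hc av bv hd]]] := HV v; have [nav nbv] := nadjD hc hd.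
case: (eqVneq a b) => [ab|nab].
  exfalso; apply: (Single (a := a) (v := v)) => // x /hd.
  by rewrite /dom2 -ab; case/or4P=> ->; rewrite ?orbT.
exists a, b; split => //; move: hc; by rewrite /conn2 (negbTE nab).
Qed.

Lemma nadj v a b : e a b -> (forall x, x != v -> dom2 e a b x) ->
  ~~ e a v /\ ~~ e b v.
Proof. by move=> h; apply: nadjD; rewrite /conn2 h orbT. Qed.

Definition indep (I : {set T}) := forall x y, x \in I -> y \in I -> ~~ e x y.
Definition clique (K : {set T}) := forall x y, x \in K -> y \in K -> x != y -> e x y.

Lemma notK K v a : clique K -> v \in K -> a != v -> ~~ e a v -> a \notin K.
Proof. by move=> hK vK av nav; apply/negP=> aK; move: nav; rewrite hK. Qed.

Lemma L_split I K : indep I -> clique K -> (forall x, (x \in I) || (x \in K)) -> False.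
Proof.
move=> hI hK cov.
have [k kK] : exists k, k \in K.
  have /card_gt0P[v0 _] : 0 < #|T| by apply: ltn_trans Hn.
  have [a [b [_ eab _ _ _]]] := HV' v0.
  case/orP: (cov a) => aI; last by exists a.
  case/orP: (cov b) => bI; last by exists b.
  by move: eab; rewrite (negbTE (hI _ _ aI bI)).
have [a [b [_ eab ak bk hd]]] := HV' k; have [nak nbk] := nadj eab hd.
have aI : a \in I by have := cov a; rewrite (negbTE (notK hK kK ak nak)) orbF.
have bI : b \in I by have := cov b; rewrite (negbTE (notK hK kK bk nbk)) orbF.
by move: eab; rewrite (negbTE (hI _ _ aI bI)).
Qed.

Lemma L_R1 I K w u : indep I -> clique K -> w \in I -> w \in K ->
  (forall x, [|| x \in I, x \in K | x == u]) -> False.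
Proof.
move=> hI hK wI wK cov.
case: (boolP (e u w)) => euw.
  have [a [b [_ eab aw bw hd]]] := HV' w; have [naw nbw] := nadj eab hd.
  have inI : forall c, c != w -> ~~ e c w -> c \in I.
    move=> c cw ncw; have := cov c; rewrite (negbTE (notK hK wK cw ncw)) /=.
    case/orP=> // /eqP cu; by move: ncw; rewrite cu euw.
  by move: eab; rewrite (negbTE (hI _ _ (inI a aw naw) (inI b bw nbw))).
have [x ewx] := Iso w.
have xw : x != w by apply: contraTneq ewx => ->; rewrite eirr.
have xK : x \in K.
  case/orP: (cov x) => [xI|]; first by move: ewx; rewrite (negbTE (hI _ _ wI xI)).
  case/orP=> // /eqP xu; by move: ewx; rewrite xu esym (negbTE euw).
have [a [b [_ eab ax bx hd]]] := HV' x; have [nax nbx] := nadj eab hd.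
have bad : forall d, d != x -> ~~ e d x -> ~~ e w d.
  move=> d dx ndx; apply/negP=> ewd.
  case/or3P: (cov d) => [dI|dK|/eqP du].
  - by move: ewd; rewrite (negbTE (hI _ _ wI dI)).
  - by move: ndx; rewrite hK.
  - by move: ewd; rewrite du esym (negbTE euw).
have := hd w; rewrite eq_sym xw => /(_ isT).
rewrite /dom2 (negbTE (bad a ax nax)) (negbTE (bad b bx nbx)) !orbF.
case/orP=> /eqP wab.
- by move: nax; rewrite -wab ewx.
- by move: nbx; rewrite -wab ewx.
Qed.

Lemma LemmaA I K : indep I -> clique K -> #|I| + #|K| < #|T|.
Proof.
move=> hI hK.
have hIK : #|I :&: K| <= 1.
  apply/card_le1_eqP=> x y; rewrite !inE => /andP[xI xK] /andP[yI yK].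
  apply/eqP; apply: contraT=> xy; move: (hI _ _ xI yI); by rewrite hK // eq_sym.
have h1 := cardsUI I K; have h2 := cardsC (I :|: K).
case: (leqP 2 #|~: (I :|: K)|) => h3; first by lia.
have inU : forall x, x \notin ~: (I :|: K) -> (x \in I) || (x \in K).
  by move=> x; rewrite !inE negbK.
case: (posnP #|~: (I :|: K)|) => h4.
  exfalso; apply: (L_split hI hK) => x; apply: inU.
  by move/eqP: h4; rewrite cards_eq0 => /eqP->; rewrite inE.
have /cards1P [u hu] : #|~: (I :|: K)| == 1 by lia.
case: (posnP #|I :&: K|) => h5; first by lia.
exfalso; have /card_gt0P [w] := h5; rewrite inE => /andP[wI wK].
apply: (L_R1 (u := u) hI hK wI wK) => x.
case: (boolP (x \in ~: (I :|: K))) => [|/inU /orP[]->]; rewrite ?orbT // hu inE => ->.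
by rewrite !orbT.
Qed.

Lemma Case1 I K u l : indep I -> clique K -> u \notin I -> u \notin K ->
  (forall x, [|| x \in I, x \in K | x == u]) -> (forall x, x \in K -> x \notin I) ->
  #|K| = l -> #|T| = l + l + 1 -> in_G1 e l.
Proof.
move=> hI hK uI uK cov disj cardK cT.
have inI : forall c, c \notin K -> c != u -> c \in I.
  by move=> c cK cu; have := cov c; rewrite (negbTE cK) (negbTE cu) !orbF.
pose Pz v z := [&& z \in I, e u z, ~~ e z v, ~~ e u v &
                   [forall x, (x != v) ==> dom2 e u z x]].
have C1 : forall v, v \in K -> exists z, Pz v z.
  move=> v vK; have [a [b [ab eab av bv hd]]] := HV' v; have [nav nbv] := nadj eab hd.
  have aK := notK hK vK av nav; have bK := notK hK vK bv nbv.
  case: (eqVneq a u) => [au|au].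
    subst a; exists b; rewrite /Pz eab nbv nav inI //= ?andbT; last by rewrite eq_sym.
    by apply/forallP=> x; apply/implyP=> /hd.
  case: (eqVneq b u) => [bu|bu].
    subst b; exists a; rewrite /Pz esym eab nav nbv inI //= ?andbT.
    by apply/forallP=> x; apply/implyP=> /hd; rewrite domC.
  by move: eab; rewrite (negbTE (hI _ _ (inI a aK au) (inI b bK bu))).
pose phi v := odflt u [pick z | Pz v z].
have phiP : forall v, v \in K -> Pz v (phi v).
  move=> v vK; rewrite /phi; case: pickP => [z //|h].
  by have [z hz] := C1 v vK; move: (h z); rewrite hz.
have nuK : forall v, v \in K -> ~~ e u v by move=> v /phiP /and5P[].
have phiI : forall v, v \in K -> phi v \in I by move=> v /phiP /and5P[].
have phin : forall v, v \in K -> ~~ e (phi v) v by move=> v /phiP /and5P[].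
have phid : forall v x, v \in K -> x != v -> dom2 e u (phi v) x.
  by move=> v x /phiP /and5P[_ _ _ _ /forallP /(_ x) /implyP].
have phiadj : forall v k, v \in K -> k \in K -> k != v -> e k (phi v).
  move=> v k vK kK kv; have := phid v k vK kv.
  rewrite /dom2 (esym k u) (negbTE (nuK k kK)).
  have -> : (k == u) = false by apply/negbTE; apply: contraNneq uK => <-.
  have -> : (k == phi v) = false.
    by apply/negbTE; apply: contraTneq (phiI v vK) => <-; apply: disj.
  by [].
have phiinj : forall v v', v \in K -> v' \in K -> phi v = phi v' -> v = v'.
  move=> v v' vK v'K h; apply/eqP; apply: contraT => vv'.
  by move: (phiadj v v' vK v'K); rewrite eq_sym vv' h esym (negbTE (phin v' v'K)) => /(_ isT).
have l1 : 0 < l by move: Hn; rewrite cT; case: (l).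
have uIall : forall x, x \in I -> e u x.
  have /card_gt0P [v vK] : 0 < #|K| by rewrite cardK.
  move=> x xI; have xv : x != v by apply: contraTneq xI => ->; apply: disj.
  have := phid v x vK xv; rewrite /dom2.
  have -> : (x == u) = false by apply/negbTE; apply: contraNneq uI => <-.
  rewrite (negbTE (hI _ _ xI (phiI v vK))) orbF /=.
  case/orP=> [/eqP->|]; last by rewrite esym.
  by have /and5P[] := phiP v vK.
pose s := enum K.
have ss : size s = l by rewrite -cardK cardE.
have nthK : forall i, i < l -> nth u s i \in K.
  by move=> i il; rewrite -(mem_enum (mem K)) mem_nth // ss.
have nthE : forall (i j : 'I_l), (nth u s i == nth u s j) = (i == j).
  by move=> i j; rewrite nth_uniq ?ss ?enum_uniq.
pose g (p : G1_vertex l) : T :=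
  match p with
  | None => u
  | Some (inl i) => nth u s i
  | Some (inr i) => phi (nth u s i)
  end.
have ginj : injective g.
  have nIK : forall x, x \in K -> x \in I -> False.
    by move=> x xK xI; move: (disj x xK); rewrite xI.
  move=> [[i|i]|] [[j|j]|] //= h.
  - by congr (Some (inl _)); apply/eqP; rewrite -nthE h.
  - by exfalso; apply: (nIK (nth u s i)); [rewrite nthK | rewrite h phiI ?nthK].
  - by move: uK; rewrite -h nthK.
  - by exfalso; apply: (nIK (nth u s j)); [rewrite nthK | rewrite -h phiI ?nthK].
  - congr (Some (inr _)); apply/eqP; rewrite -nthE; apply/eqP.
    by apply: phiinj; rewrite ?nthK.
  - by move: uI; rewrite -h phiI ?nthK.
  - by move: uK; rewrite h nthK.
  - by move: uI; rewrite h phiI ?nthK.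
have grel : forall p q, e (g p) (g q) = G1_rel p q.
  have key : forall i j : 'I_l, e (nth u s j) (phi (nth u s i)) = (i != j).
    move=> i j; case: (eqVneq i j) => [->|ij].
      by apply/negbTE; rewrite esym phin ?nthK.
    by rewrite phiadj ?nthK // nthE eq_sym.
  move=> [[i|i]|] [[j|j]|] /=.
  - case: (eqVneq i j) => [->|ij]; first by rewrite eirr.
    by rewrite hK ?nthK // nthE.
  - by rewrite key eq_sym.
  - by rewrite esym; apply/negbTE; apply: nuK; rewrite nthK.
  - by rewrite esym key.
  - by apply/negbTE; apply: hI; rewrite phiI ?nthK.
  - by rewrite esym uIall ?phiI ?nthK.
  - by apply/negbTE; apply: nuK; rewrite nthK.
  - by rewrite uIall ?phiI ?nthK.
  - by rewrite eirr.
have gbij : bijective g.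
  apply: inj_card_bij => //; by rewrite /G1_vertex card_option card_sum card_ord cT addn1.
case: gbij => f gf fg.
exists f; split; first by exists g.
by move=> x y; rewrite -grel !fg.
Qed.

Lemma dom2C (r : rel T) a b x : dom2 r a b x = dom2 r b a x.
Proof. by rewrite /dom2; case: (x == a); case: (x == b); case: (r x a); case: (r x b). Qed.

Lemma Core I K w u1 u2 c l : indep I -> clique K -> w \in I -> w \in K ->
  #|K| = l -> 2 <= l -> u1 != u2 -> u1 \notin I -> u1 \notin K -> u2 \notin I -> u2 \notin K ->
  (forall x, [|| x \in I, x \in K, x == u1 | x == u2]) ->
  (forall x, x \in I -> x \in K -> x = w) ->
  e u2 c -> c != u2 -> c != w -> ~~ e u2 w -> ~~ e c w ->
  (forall x, x != w -> dom2 e u2 c x) ->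
  exists K', [/\ clique K', #|K'| = l & forall x, x \in K' -> x \notin I].
Proof.
move=> hI hK wI wK cardK l2 u12 u1I u1K u2I u2K cov nIK eu2c cu2 cw nu2w ncw hdw.
have KnI : forall x, x \in K -> x != w -> x \notin I.
  by move=> x xK xw; apply: contraNN xw => xI; rewrite (nIK x xI xK).
have S1 : forall v, v \in K -> v != w -> e w u1 /\ ~~ e u1 v.
  move=> v vK vw; have [a [b [ab eab av bv hd]]] := HV' v; have [nav nbv] := nadj eab hd.
  have ewv : e w v by rewrite hK // eq_sym.
  have H : forall d, d != v -> ~~ e d v -> e w d -> d = u1.
    move=> d dv ndv ewd; case/or4P: (cov d) => [dI|dK|/eqP//|/eqP du2].
    - by move: ewd; rewrite (negbTE (hI _ _ wI dI)).
    - by move: (notK hK vK dv ndv); rewrite dK.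
    - by move: nu2w; rewrite -du2 esym ewd.
  have := hd w; rewrite eq_sym vw => /(_ isT); rewrite /dom2.
  case/or4P=> [/eqP wa|/eqP wb|ewa|ewb].
  - by move: nav; rewrite -wa ewv.
  - by move: nbv; rewrite -wb ewv.
  - by have au1 := H a av nav ewa; rewrite -au1 ewa nav.
  - by have bu1 := H b bv nbv ewb; rewrite -bu1 ewb nbv.
have [k0 k0K k0w] : exists2 k0, k0 \in K & k0 != w.
  have : 0 < #|K :\ w|.
    have := cardsD1 w K; rewrite wK cardK => h.
    by move: l2; rewrite h add1n ltnS.
  by case/card_gt0P=> k0; rewrite !inE => /andP[k0w k0K]; exists k0.
have ewu1 : e w u1 by case: (S1 k0 k0K k0w).
have nu1K : forall v, v \in K -> v != w -> ~~ e u1 v by move=> v vK vw; case: (S1 v vK vw).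
have cI : c \in I.
  case/or4P: (cov c) => [//|cK|/eqP cu1|/eqP cu2']; last by move: cu2; rewrite cu2' eqxx.
    by move: (notK hK wK cw ncw); rewrite cK.
  by move: ncw; rewrite cu1 esym ewu1.
have hUU : forall v, v \in K -> v != w -> (forall x, x \in I -> x != w -> e x v) ->
    forall d, d != v -> ~~ e d v -> (d == u1) || (d == u2).
  move=> v vK vw hv d dv ndv; case/or4P: (cov d) => [dI|dK|->//|->]; rewrite ?orbT //.
    case: (eqVneq d w) => [dw|dw]; last by move: ndv; rewrite hv.
    by move: (notK hK vK dv ndv); rewrite dw wK.
  by move: (notK hK vK dv ndv); rewrite dK.
case: (boolP [forall k, ((k \in K) && (k != w)) ==> e u2 k]) => [/forallP hA|].
  exists (u2 |: (K :\ w)); split.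
  - move=> x y; rewrite !inE => /orP[/eqP->|/andP[xw xK]] /orP[/eqP->|/andP[yw yK]].
    + by rewrite eqxx.
    + by move=> _; have := hA y; rewrite yK yw.
    + by move=> _; have := hA x; rewrite xK xw esym.
    + exact: hK.
  - have h : u2 \notin K :\ w by rewrite !inE negb_and u2K orbT.
    rewrite cardsU1 h add1n.
    by rewrite -cardK (cardsD1 w K) wK add1n.
  - move=> x; rewrite !inE => /orP[/eqP->//|/andP[xw xK]]; exact: KnI.
rewrite negb_forall => /existsP [k]; rewrite negb_imply => /andP[/andP[kK kw] nu2k].
have kI : k \notin I by apply: KnI.
have ekc : e k c.
  have := hdw k kw; rewrite /dom2 esym (negbTE nu2k).
  have -> : (k == u2) = false by apply/negbTE; apply: contraNneq u2K => <-.
  have -> : (k == c) = false by apply/negbTE; apply: contraNneq kI => ->.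
  by [].
have u2I' : forall x, x \in I -> x != w -> e x u2.
  move=> x xI xw; have := hdw x xw; rewrite /dom2 (negbTE (hI _ _ xI cI)) orbF.
  have -> : (x == u2) = false by apply/negbTE; apply: contraNneq u2I => <-.
  by rewrite /=; case/orP=> // /eqP->; rewrite esym.
have eu12 : e u1 u2.
  case: (boolP (e u1 u2)) => // nu12; exfalso.
  have u2k : u2 != k by apply: contraNneq u2K => ->.
  have [a [b [hc hd]]] := HE u2k nu2k.
  set e' := add_edge e u2 k in hc hd.
  have e'E : forall x y, e' x y = [|| e x y, (x == u2) && (y == k) | (x == k) && (y == u2)].
    by [].
  have e'sym : symmetric e'.
    move=> x y; rewrite !e'E esym; case: (x == u2); case: (y == u2); case: (x == k); case: (y == k);
    by rewrite ?orbT ?orbF.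
  have u1u2 : (u1 == u2) = false by apply/negbTE.
  have u1k : (u1 == k) = false by apply/negbTE; apply: contraNneq u1K => ->.
  have core : forall d t, conn2 e' d t -> (forall x, dom2 e' d t x) -> (d == u1) || e u1 d -> False.
    move=> d t hct hdt hd1.
    have du2 : (d == u2) = false.
      apply/negbTE; apply: contraTneq hd1 => ->; by rewrite eq_sym u1u2 (negbTE nu12).
    have dk : (d == k) = false.
      by apply/negbTE; apply: contraTneq hd1 => ->; rewrite eq_sym u1k (negbTE (nu1K k kK kw)).
    have dIu : (d == u1) || (d \in I).
      case/or4P: (cov d) => [->|dK|->//|/eqP du]; rewrite ?orbT //; last by rewrite du eqxx in du2.
      case: (eqVneq d w) => [->|dw]; first by rewrite wI orbT.
      by move: hd1; rewrite (negbTE (nu1K d dK dw)) orbF => ->.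
    have wu2 : (w == u2) = false by apply/negbTE; apply: contraNneq u2K => <-.
    have wk : (w == k) = false by apply/negbTE; rewrite eq_sym.
    case: (eqVneq t u2) => [tu2|tu2].
      subst t; move: hct; rewrite /conn2 du2 /= e'E du2 dk /= orbF => edu2.
      case/orP: dIu => [/eqP du1|dI]; first by move: nu12; rewrite -du1 edu2.
      case: (eqVneq d w) => [dw|dw]; first by move: nu2w; rewrite esym -dw edu2.
      move: (hdt w); rewrite /dom2 !e'E wu2 wk /= (negbTE (hI _ _ wI dI)) !orbF.
      by rewrite esym (negbTE nu2w) orbF /= eq_sym (negbTE dw).
    case: (eqVneq t k) => [tk|tk].
      subst t; move: hct; rewrite /conn2 dk /= e'E du2 dk /= !orbF => edk.
      case/orP: dIu => [/eqP du1|dI]; first by move: (nu1K k kK kw); rewrite -du1 edk.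
      case: (eqVneq d w) => [dw|dw].
        subst d; have kIall : forall x, x \in I -> x != w -> e x k.
          move=> x xI xw; move: (hdt x); rewrite /dom2 !e'E (negbTE xw) (negbTE (hI _ _ xI wI)) /=.
          have -> : (x == u2) = false by apply/negbTE; apply: contraNneq u2I => <-.
          have -> : (x == k) = false by apply/negbTE; apply: contraNneq kI => <-.
          by rewrite /= !orbF.
        have [a' [b' [ab' eab' ak' bk' hd']]] := HV' k; have [nak nbk] := nadj eab' hd'.
        have h1 := hUU k kK kw kIall a' ak' nak; have h2 := hUU k kK kw kIall b' bk' nbk.
        move: ab' eab'.
        case/orP: h1 => /eqP->; case/orP: h2 => /eqP->; rewrite ?eqxx //.
          by move=> _ h; move: nu12; rewrite h.
        by move=> _ h; move: nu12; rewrite esym h.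
      apply: (H0 (a := d) (b := k)); first by rewrite /conn2 edk orbT.
      move=> x; case: (eqVneq x u2) => [->|xu2].
        by rewrite /dom2 esym u2I' ?orbT.
      move: (hdt x); rewrite /dom2 !e'E du2 dk (negbTE xu2) /= !andbF !orbF.
      have -> : (k == u2) = false by rewrite eq_sym; apply/negbTE.
      by rewrite andbF orbF.
    apply: (H0 (a := d) (b := t)).
      by move: hct; rewrite /conn2 e'E du2 dk /= !orbF.
    move=> x; move: (hdt x); rewrite /dom2 !e'E du2 dk (negbTE tu2) (negbTE tk).
    by rewrite !andbF !orbF.
  have := hd u1; rewrite /dom2 !e'E u1u2 u1k /= !orbF.
  case/or4P=> [/eqP ea|/eqP eb|h|h].
  - by apply: (core a b) => //; rewrite -ea eqxx.
  - apply: (core b a) => //; first by rewrite /conn2 eq_sym e'sym.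
      by move=> x; rewrite dom2C.
    by rewrite -eb eqxx.
  - by apply: (core a b) => //; rewrite h orbT.
  - apply: (core b a) => //; first by rewrite /conn2 eq_sym e'sym.
      by move=> x; rewrite dom2C.
    by rewrite h orbT.
have [b' [b'K b'w nb' hd']] : exists b', [/\ b' \in K, b' != w, ~~ e b' u2 &
    forall x, x != u2 -> dom2 e w b' x].
  have [a [b [ab eab au bu hd]]] := HV' u2; have [na nb] := nadj eab hd.
  have inK : forall d, d != u2 -> ~~ e d u2 -> d \in K.
    move=> d du dn; case/or4P: (cov d) => [dI|//|/eqP du1|/eqP du2]; last by rewrite du2 eqxx in du.
      case: (eqVneq d w) => [->//|dw]; by move: dn; rewrite u2I'.
    by move: dn; rewrite du1 eu12.
  have aK := inK a au na; have bK := inK b bu nb.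
  have isw : forall d, d \in K -> (u1 == d) || e u1 d -> d = w.
    move=> d dK /orP[/eqP ud|h]; first by move: u1K; rewrite ud dK.
    by apply/eqP; apply: contraTT h => dw; apply: nu1K.
  have u1u2 : u1 != u2 by [].
  move: (hd u1 u1u2); rewrite /dom2 => /or4P[h|h|h|h].
  - have aw : a = w by apply: isw; rewrite ?h ?orbT. exists b; split => //; first by rewrite -aw eq_sym.
    by move=> x /hd; rewrite aw.
  - have bw : b = w by apply: isw; rewrite ?h ?orbT. exists a; split => //; first by rewrite -bw.
    by move=> x /hd; rewrite dom2C bw.
  - have aw : a = w by apply: isw; rewrite ?h ?orbT. exists b; split => //; first by rewrite -aw eq_sym.
    by move=> x /hd; rewrite aw.
  - have bw : b = w by apply: isw; rewrite ?h ?orbT. exists a; split => //; first by rewrite -bw.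
    by move=> x /hd; rewrite dom2C bw.
have b'I : forall x, x \in I -> x != w -> e x b'.
  move=> x xI xw; have xu2 : x != u2 by apply: contraNneq u2I => <-.
  move: (hd' x xu2); rewrite /dom2 (negbTE xw) (negbTE (hI _ _ xI wI)) /=.
  have -> : (x == b') = false by apply/negbTE; apply: contraTneq xI => ->; apply: KnI.
  by [].
case: (boolP [exists k', [&& k' \in K, k' != w & k' != b']]) => [/existsP[k' /and3P[k'K k'w k'b]]|hno].
  exfalso.
  have [a [b [ab eab ab0 bb0 hd]]] := HV' b'; have [na nb] := nadj eab hd.
  have ek'u2 : forall d, d != b' -> ~~ e d b' -> (k' == d) || e k' d -> e k' u2.
    move=> d db nd /orP[/eqP kd|h].
      by move: (notK hK b'K db nd); rewrite -kd k'K.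
    case/orP: (hUU b' b'K b'w b'I d db nd) => /eqP du; last by rewrite -du.
    by move: (nu1K k' k'K k'w); rewrite -du esym h.
  have ek'2 : e k' u2.
    move: (hd k' k'b); rewrite /dom2 => /or4P[h|h|h|h].
    - by apply: (ek'u2 a) => //; rewrite h.
    - by apply: (ek'u2 b) => //; rewrite h.
    - by apply: (ek'u2 a) => //; rewrite h orbT.
    - by apply: (ek'u2 b) => //; rewrite h orbT.
  apply: (H0 (a := u2) (b := k')); first by rewrite /conn2 esym ek'2 orbT.
  move=> x; rewrite /dom2; case/or4P: (cov x) => [xI|xK|/eqP->|/eqP->]; rewrite ?eqxx ?orbT //.
  - case: (eqVneq x w) => [->|xw].
      have ewk : e w k' by rewrite hK // eq_sym.
      by rewrite ewk !orbT.
    by rewrite u2I' ?orbT.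
  - case: (eqVneq x k') => [->|xk]; first by rewrite ?eqxx ?orbT.
    by rewrite (hK x k') ?orbT.
  - by rewrite eu12 /= !orbT.
exists [set u1; u2]; split.
- move=> x y; rewrite !inE => /orP[]/eqP-> /orP[]/eqP->; rewrite ?eqxx //.
  by rewrite esym.
- rewrite cards2 u12 /=.
  have : K \subset [set w; b'].
    apply/subsetP=> x xK; rewrite !inE; case: (eqVneq x w) => //= xw.
    apply/eqP; apply: contraNeq hno => xb; apply/existsP; exists x; by rewrite xK xw xb.
  move/subset_leq_card; rewrite cards2 cardK => h.
  apply/eqP; rewrite eqn_leq l2 /= (leq_trans h) //; by case: (w != b').
- by move=> x; rewrite !inE => /orP[]/eqP->.
Qed.

Lemma Case2 I K w l : indep I -> clique K -> w \in I -> w \in K ->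
  #|I| = l -> #|K| = l -> 2 <= l -> #|T| = l + l + 1 ->
  exists K', [/\ clique K', #|K'| = l & forall x, x \in K' -> x \notin I].
Proof.
move=> hI hK wI wK cardI cardK l2 cT.
have nIK : forall x, x \in I -> x \in K -> x = w.
  move=> x xI xK; apply/eqP; apply: contraT => xw.
  by move: (hI _ _ xI wI); rewrite hK.
have cIK : #|I :&: K| = 1.
  apply/eqP/cards1P; exists w; apply/setP=> x; rewrite !inE.
  apply/andP/eqP => [[xI xK]|->]; [exact: nIK | by rewrite wI wK].
have cR : #|~: (I :|: K)| == 2.
  move: (cardsUI I K) (cardsC (I :|: K)); rewrite cardI cardK cIK cT => h1 h2.
  apply/eqP; lia.
case/cards2P: cR => u1 [u2 [u12 hR]].
have inR : forall x, x \in [set u1; u2] -> (x \notin I) && (x \notin K).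
  by move=> x; rewrite -hR !inE negb_or.
have /andP[u1I u1K] : (u1 \notin I) && (u1 \notin K) by apply: inR; rewrite !inE eqxx.
have /andP[u2I u2K] : (u2 \notin I) && (u2 \notin K) by apply: inR; rewrite !inE eqxx orbT.
have cov : forall x, [|| x \in I, x \in K, x == u1 | x == u2].
  move=> x; case: (boolP (x \in I :|: K)); first by rewrite inE => /orP[]->; rewrite ?orbT.
  by rewrite -in_setC hR !inE => /orP[]->; rewrite !orbT.
have go : forall r c, (r == u1) || (r == u2) -> e r c -> c != r -> c != w -> ~~ e r w ->
    ~~ e c w -> (forall x, x != w -> dom2 e r c x) ->
    exists K', [/\ clique K', #|K'| = l & forall x, x \in K' -> x \notin I].
  move=> r c /orP[]/eqP-> h1 h2 h3 h4 h5 h6.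
  - apply: (Core (I := I) (K := K) (w := w) (u1 := u2) (u2 := u1) (c := c) (l := l)) => //; first by rewrite eq_sym.
    by move=> x; case/or4P: (cov x) => ->; rewrite ?orbT.
  - exact: (Core (I := I) (K := K) (w := w) (u1 := u1) (u2 := u2) (c := c) (l := l)).
have [a [b [ab eab aw bw hd]]] := HV' w; have [na nb] := nadj eab hd.
have inU : forall d, d \notin I -> d != w -> ~~ e d w -> (d == u1) || (d == u2).
  move=> d dI dw nd; case/or4P: (cov d) => [h|h|->|->]; rewrite ?orbT //.
    by rewrite h in dI.
  by move: (notK hK wK dw nd); rewrite h.
case: (boolP (a \in I)) => aI.
  case: (boolP (b \in I)) => bI; first by move: eab; rewrite (negbTE (hI _ _ aI bI)).
  apply: (go b a) => //; first exact: inU.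
  - by rewrite esym.
  - by move=> x /hd; rewrite dom2C.
apply: (go a b) => //; first exact: inU.
by rewrite eq_sym.
Qed.

Lemma Case1' I K l : indep I -> clique K -> (forall x, x \in K -> x \notin I) ->
  #|I| = l -> #|K| = l -> #|T| = l + l + 1 -> in_G1 e l.
Proof.
move=> hI hK disj cardI cardK cT.
have cIK : #|I :&: K| = 0.
  apply/eqP; rewrite cards_eq0; apply/eqP/setP=> x; rewrite !inE.
  by apply/negbTE; rewrite negb_and; case: (boolP (x \in K)) => xK; rewrite ?orbT // disj.
have cR : #|~: (I :|: K)| == 1.
  move: (cardsUI I K) (cardsC (I :|: K)); rewrite cardI cardK cIK cT => h1 h2.
  apply/eqP; lia.
case/cards1P: cR => u hR.
have : u \in ~: (I :|: K) by rewrite hR inE.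
rewrite !inE negb_or => /andP[uI uK].
apply: (Case1 (I := I) (K := K) (u := u)) => // x.
case: (boolP (x \in I :|: K)); first by rewrite inE => /orP[]->; rewrite ?orbT.
by rewrite -in_setC hR !inE => ->; rewrite !orbT.
Qed.

Lemma indepP S : independentb e S -> indep S.
Proof.
by move=> /forallP h x y xS yS; move: (h x); rewrite xS /= => /forallP /(_ y); rewrite yS.
Qed.

Lemma cliqueP S : cliqueb e S -> clique S.
Proof.
move=> /forallP h x y xS yS xy; move: (h x); rewrite xS /= => /forallP /(_ y).
by rewrite yS xy.
Qed.

Lemma main_sec :
  let n := #|T| in
  let alpha := independence_number e in
  let omega := clique_number e in
  alpha * omega <= (n.-1)./2 * uphalf n.-1 /\
  (4 * (alpha * omega) = (n.-1) ^ 2 <-> exists l, 2 <= l /\ in_G1 e l).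
Proof.
move=> n alpha omega.
have [I0 I0i hI0] : exists2 I0, independentb e I0 & alpha = #|I0|.
  have h0 : 0 < #|[pred S : {set T} | independentb e S]|.
    apply/card_gt0P; exists set0; rewrite inE; apply/forallP=> x; by rewrite inE.
  have [S Sin hS] := eq_bigmax_cond (fun S : {set T} => #|S|) h0.
  by exists S => //; rewrite /alpha /independence_number -hS.
have [K0 K0c hK0] : exists2 K0, cliqueb e K0 & omega = #|K0|.
  have h0 : 0 < #|[pred S : {set T} | cliqueb e S]|.
    apply/card_gt0P; exists set0; rewrite inE; apply/forallP=> x; by rewrite inE.
  have [S Sin hS] := eq_bigmax_cond (fun S : {set T} => #|S|) h0.
  by exists S => //; rewrite /omega /clique_number -hS.
have amax : forall S, independentb e S -> #|S| <= alpha.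
  by move=> S hS; exact: (@leq_bigmax_cond _ (fun S => independentb e S) (fun S => #|S|) S hS).
have omax : forall S, cliqueb e S -> #|S| <= omega.
  by move=> S hS; exact: (@leq_bigmax_cond _ (fun S => cliqueb e S) (fun S => #|S|) S hS).
have hA : alpha + omega <= n.-1.
  have := LemmaA (indepP I0i) (cliqueP K0c); rewrite -hI0 -hK0 /n.
  by case: #|T|.
split; first exact: arith1.
split.
  move=> heq; have [aw m2] := arith2 hA heq.
  have cT : #|T| = alpha + alpha + 1 by move: m2; rewrite /n; move: Hn; case: #|T| => //= ? _ ->; rewrite addn1.
  have l2 : 2 <= alpha.
    rewrite leqNgt; apply/negP => hl.
    have adj : forall x y, x != y -> e x y.
      move=> x y xy; apply: contraT => nxy.
      have : #|[set x; y]| <= alpha.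
        apply: amax; apply/forallP=> a; apply/implyP; rewrite !inE => ha.
        apply/forallP=> b; apply/implyP; rewrite !inE => hb.
        case/orP: ha => /eqP->; case/orP: hb => /eqP->; rewrite ?eirr //.
          by rewrite esym.
      by rewrite cards2 xy; move: hl; case: (alpha) => [|[|]].
    have /card_gt0P[a0 _] : 0 < #|T| by apply: ltn_trans Hn.
    apply: (H0 (a := a0) (b := a0)); first by rewrite /conn2 eqxx.
    move=> x; rewrite /dom2; case: (eqVneq x a0) => // xa; by rewrite adj.
  exists alpha; split => //.
  have cI0 : #|I0| = alpha by [].
  have cK0 : #|K0| = alpha by rewrite -hK0 aw.
  case: (boolP [exists w, (w \in I0) && (w \in K0)]).
    case/existsP=> w /andP[wI wK].
    have [K' [hK' cK' dK']] := Case2 (indepP I0i) (cliqueP K0c) wI wK cI0 cK0 l2 cT.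
    exact: (Case1' (indepP I0i) hK' dK' cI0 cK' cT).
  move/existsPn=> hd; apply: (Case1' (indepP I0i) (cliqueP K0c) _ cI0 cK0 cT).
  by move=> x xK; move: (hd x); rewrite xK andbT.
case=> l [l2 [f [[g fg gf] hf]]].
have ginj : injective g by apply: (can_inj gf).
have cT : #|T| = l + l + 1.
  rewrite (bij_eq_card (f := f)); last by exists g.
  by rewrite /G1_vertex card_option card_sum card_ord addn1.
pose SI := [set g (Some (inr i)) | i : 'I_l].
pose SK := [set g (Some (inl i)) | i : 'I_l].
have cSI : #|SI| = l.
  rewrite card_imset ?card_ord //; move=> i j /ginj [] //.
have cSK : #|SK| = l.
  rewrite card_imset ?card_ord //; move=> i j /ginj [] //.
have iSI : independentb e SI.
  apply/forallP=> x; apply/implyP=> /imsetP[i _ ->].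
  apply/forallP=> y; apply/implyP=> /imsetP[j _ ->].
  by rewrite hf !gf.
have cSKc : cliqueb e SK.
  apply/forallP=> x; apply/implyP=> /imsetP[i _ ->].
  apply/forallP=> y; apply/implyP=> /imsetP[j _ ->].
  rewrite hf !gf /=; apply/implyP; apply: contraNneq => ->; by [].
have la := amax _ iSI; have lo := omax _ cSKc.
rewrite cSI in la; rewrite cSK in lo.
move: hA; rewrite /n cT addn1 /= => hA.
have -> : alpha = l by lia.
have -> : omega = l by lia.
rewrite expnS expn1; nia.
Qed.

End Main.

Theorem corollary3p7 (T : finType) (e : rel T) :
  simple_graph e ->
  connectedb e [set: T] ->
  maximal_vertex_critical [set: T] e 3 ->
  let n := #|T| in
  let alpha := independence_number e in
  let omega := clique_number e in
  alpha * omega <= (n.-1)./2 * uphalf n.-1 /\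
  (4 * (alpha * omega) = (n.-1) ^ 2 <-> exists l, 2 <= l /\ in_G1 e l).
Proof.
move=> [esym eirr] _ [[g3 hEC] [[n3 _] [_ hVC]]].
rewrite cardsT in n3.
have H0 : forall a b, conn2 e a b -> ~ (forall x, dom2 e a b x).
  move=> a b hc hd.
  have := @bigmin_le _ (fun D => is_cds [set: T] e D) (fun D => #|D|) #|T|.+1 [set a; b].
  rewrite -/(gamma_c [set: T] e) g3 => /(_ (cds_of_pair esym (in_setT a) (in_setT b) hc (fun x _ => hd x))).
  by rewrite cards2; case: (a != b).
have HV : forall v, exists a b,
    [/\ conn2 e a b, a != v, b != v & forall x, x != v -> dom2 e a b x].
  move=> v; have := hVC v (in_setT v).
  move/bigmin_lt => /(_ (leq_trans n3 (leqnSn _))) [D [hD cD]].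
  have ne : exists x, x \in [set: T] :\ v.
    case: (boolP [exists x, x != v]) => [/existsP[x xv]|/existsPn h].
      by exists x; rewrite !inE xv.
    have : #|T| <= 1.
      apply/card_le1_eqP => x y _ _; move: (h x) (h y); rewrite !negbK => /eqP-> /eqP->//.
    by rewrite leqNgt (ltn_trans _ n3).
  have [a [b [aV bV hc hd]]] := pair_of_cds eirr hD cD ne.
  exists a, b; split => //.
  - by move: aV; rewrite !inE andbT.
  - by move: bV; rewrite !inE andbT.
  - by move=> x xv; apply: hd; rewrite !inE xv.
have HE : forall u v, u != v -> ~~ e u v -> exists a b,
    conn2 (add_edge e u v) a b /\ forall x, dom2 (add_edge e u v) a b x.
  move=> u v uv nuv; have := hEC u v (in_setT u) (in_setT v) uv nuv.
  move/bigmin_lt => /(_ (leq_trans n3 (leqnSn _))) [D [hD cD]].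
  have irr' : irreflexive (add_edge e u v).
    move=> x; rewrite /add_edge /= eirr /=.
    by apply/negP => /orP[] /andP[/eqP-> /eqP h]; rewrite h eqxx in uv.
  have [a [b [_ _ hc hd]]] := pair_of_cds irr' hD cD (ex_intro _ u (in_setT u)).
  by exists a, b; split => // x; apply: hd; rewrite in_setT.
exact: (main_sec esym eirr n3 H0 HV HE).
Qed.
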